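(* Let $\mathcal{A}$ be a finite set of positive integers, let $w \leqslant z$ be real numbers, and let $m_1, m_2$ be real numbers with $(m_1, m_2) \in \mathcal{U}$. Then $$ S(\mathcal{A}, z) \leqslant S(\mathcal{A}, w) - \frac{m_1 + m_2 - 1}{m_1 m_2} \sum_{w \leqslant p_1 < z} S(\mathcal{A}_{p_1}, w) + \frac{2}{m_1 m_2} \sum_{w \leqslant p_2 < p_1 < z} S(\mathcal{A}_{p_1 p_2}, w). $$
   Context: Throughout, $p, p_1, p_2, \dots$ denote prime numbers. For a finite set $\mathcal{A}$ of positive integers and a positive integer $d$, $\mathcal{A}_d = \{a : ad \in \mathcal{A}\}$. For real $z$, $S(\mathcal{A}, z)$ denotes the number of $a \in \mathcal{A}$ having no prime factor less than $z$. Let $T = (0,1] \cup [2,3] \cup [4,5] \cup \cdots$, i.e. $T$ is the union of $(0,1]$ and the intervals $[k-1,k]$ over all odd integers $k \geqslant 3$, and let $\mathcal{U} = \{(x_1, x_2) : x_1, x_2 \in T,\ |x_1 - x_2| \leqslant 1\}$. *)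

(* Defs.v *)
From mathcomp Require Import all_boot all_order all_algebra.
From mathcomp Require Import reals.
Set Implicit Arguments. Unset Strict Implicit. Unset Printing Implicit Defensive.
Import Order.TTheory GRing.Theory Num.Theory.
Local Open Scope ring_scope.

Section Defs.
Variable R : realType.

Definition sift (A : seq nat) (z : R) : nat :=
  count (fun a => ~~ has (fun p => p%:R < z) (primes a)) A.

(* A_d = { a : a d \in A }  (for d > 0 this is the list of a / d, d | a, a in A) *)
Definition subA (A : seq nat) (d : nat) : seq nat :=
  [seq (a %/ d)%N | a <- A & (d %| a)%N].

Definition primes_in (w z : R) : seq nat :=
  [seq p <- iota 0 (Num.truncn z).+1 | prime p && (w <= p%:R) && (p%:R < z)].

Definition inT (x : R) : Prop :=
  (0 < x <= 1) \/ (exists k : nat, odd k /\ (3 <= k)%N /\ (k.-1)%:R <= x <= k%:R).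

Definition inU (x1 x2 : R) : Prop := inT x1 /\ inT x2 /\ `|x1 - x2| <= 1.
End Defs.

(* Main.v *)
Require Import Defs.
From mathcomp Require Import all_boot all_order all_algebra.
From mathcomp Require Import reals.
From mathcomp Require Import zify ring lra.
Import Order.TTheory GRing.Theory Num.Theory.
Local Open Scope ring_scope.

Lemma Tlo {R : realType} (x : R) (n : nat) :
  inT x -> n%:R - 1 < x -> x < n%:R -> odd n.
Proof.
case=> [/andP[x0 x1] | [k [ko [k3 /andP[kx xk]]]]] h1 h2.
  have : (0 < n)%N by rewrite -(ltr0n R); lra.
  have : (n < 2)%N by rewrite -(ltr_nat R); lra.
  by case: n {h1 h2} => [|[|n]].
have a1 : (n < k.+1)%N by rewrite -(ltr_nat R) -addn1 natrD; lra.
have a2 : (k.-1 < n)%N by rewrite -(ltr_nat R); lra.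
have -> : n = k by lia.
done.
Qed.

Lemma Thi {R : realType} (x : R) (n : nat) :
  inT x -> n%:R < x -> x < n%:R + 1 -> ~~ odd n.
Proof.
case=> [/andP[x0 x1] | [k [ko [k3 /andP[kx xk]]]]] h1 h2.
  have : (n < 1)%N by rewrite -(ltr_nat R); lra.
  by case: n {h1 h2}.
have a1 : (n < k)%N by rewrite -(ltr_nat R); lra.
have a2 : (k.-1 < n.+1)%N by rewrite -(ltr_nat R) -addn1 natrD; lra.
have -> : n = k.-1 by lia.
by case: k ko {a1 a2 k3 kx xk}.
Qed.

Lemma Umid {R : realType} (m1 m2 : R) (n : nat) :
  inT m1 -> inT m2 -> m2 - m1 <= 1 -> m1 < n%:R -> n%:R < m2 -> False.
Proof.
move=> t1 t2 d h1 h2.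
have := Tlo m1 n t1 (ltac:(lra)) h1.
have := Thi m2 n t2 h2 (ltac:(lra)).
by move=> /negbTE ->.
Qed.

Lemma Uprod {R : realType} (m1 m2 : R) (n : nat) :
  inU m1 m2 -> 0 <= (n%:R - m1) * (n%:R - m2).
Proof.
move=> [t1 [t2 d]].
have d1 : m2 - m1 <= 1 by move: d; rewrite ler_norml; lra.
have d2 : m1 - m2 <= 1 by move: d; rewrite ler_norml; lra.
case: (ltrgtP n%:R m1) => h1; case: (ltrgtP n%:R m2) => h2; try nra.
- by case: (Umid m2 m1 n t2 t1 d2 h2 h1).
- by case: (Umid m1 m2 n t1 t2 d1 h1 h2).
Qed.

Definition fw {R : realType} (w : R) (a : nat) : bool :=
  ~~ has (fun p => p%:R < w) (primes a).

Lemma siftd {R : realType} (w : R) (a d : nat) : (0 < a)%N -> (d %| a)%N ->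
  (forall q, prime q -> (q %| d)%N -> w <= q%:R) -> fw w (a %/ d)%N = fw w a.
Proof.
move=> a0 da hd; congr negb; apply/hasP/hasP => -[q].
  rewrite mem_primes => /and3P[pq _ qd] qw; exists q => //.
  rewrite mem_primes pq a0 /=; apply: dvdn_trans qd _.
  by rewrite -{2}(divnK da) dvdn_mulr.
rewrite mem_primes => /and3P[pq _ qa] qw; exists q => //.
have d0 : (0 < d)%N := dvdn_gt0 a0 da.
have ad0 : (0 < a %/ d)%N by rewrite divn_gt0 // dvdn_leq.
rewrite mem_primes pq ad0 /=.
move: qa; rewrite -{1}(divnK da) Euclid_dvdM // => /orP[//|qd].
have := hd q pq qd; lra.
Qed.

Lemma natr_count {R : realType} (T : Type) (a : pred T) (s : seq T) :
  (count a s)%:R = \sum_(x <- s) ((a x)%:R : R).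
Proof.
rewrite -sum1_count natr_sum big_mkcond /=; apply: eq_bigr => x _.
by case: (a x).
Qed.

Lemma natr_andb {R : realType} (b c : bool) : ((b && c)%:R : R) = b%:R * c%:R.
Proof. by case: b; rewrite ?mul1r ?mul0r. Qed.

Lemma pairs_gen {R : realType} (t : seq nat) : uniq t ->
  2 * \sum_(x <- t) \sum_(y <- t | (y < x)%N) (1 : R) = (size t)%:R ^+ 2 - (size t)%:R.
Proof.
move=> ut.
have E1 : \sum_(x <- t) \sum_(y <- t | (y < x)%N) (1 : R)
   = \sum_(x <- t) \sum_(y <- t) ((y < x)%N%:R : R).
  by apply: eq_bigr => x _; rewrite big_mkcond /=; apply: eq_bigr => y _; case: (y < x)%N.
have E2 : \sum_(x <- t) \sum_(y <- t) ((y < x)%N%:R : R)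
   = \sum_(x <- t) \sum_(y <- t) ((x < y)%N%:R : R).
  by rewrite exchange_big.
have E3 : \sum_(x <- t) \sum_(y <- t) ((y == x)%:R : R) = (size t)%:R.
  rewrite -[size t]sum1_size natr_sum big_seq [RHS]big_seq; apply: eq_bigr => x xt.
  by rewrite -natr_count count_uniq_mem // xt.
have E4 : \sum_(x <- t) \sum_(y <- t) (1 : R) = (size t)%:R ^+ 2.
  rewrite expr2 -[size t]sum1_size natr_sum mulr_suml; apply: eq_bigr => x _.
  by rewrite mulr1n mul1r.
have E5 : \sum_(x <- t) \sum_(y <- t) (1 : R) =
   \sum_(x <- t) \sum_(y <- t) ((y < x)%N%:R : R) +
   \sum_(x <- t) \sum_(y <- t) ((x < y)%N%:R : R) +
   \sum_(x <- t) \sum_(y <- t) ((y == x)%:R : R).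
  rewrite -!big_split /=; apply: eq_bigr => x _; rewrite -!big_split /=.
  by apply: eq_bigr => y _; rewrite [y == x]eq_sym; case: (ltngtP x y) => _ /=; rewrite ?add0r ?addr0.
rewrite E1; rewrite -E2 E3 E4 in E5; lra.
Qed.

Lemma pairs {R : realType} (s : seq nat) (Q : pred nat) : uniq s ->
  2 * \sum_(x <- s) \sum_(y <- s | (y < x)%N) ((Q x && Q y)%:R : R)
  = (count Q s)%:R ^+ 2 - (count Q s)%:R.
Proof.
move=> us.
have -> : \sum_(x <- s) \sum_(y <- s | (y < x)%N) ((Q x && Q y)%:R : R)
  = \sum_(x <- filter Q s) \sum_(y <- filter Q s | (y < x)%N) (1 : R).
  rewrite big_filter [RHS]big_mkcond /=; apply: eq_bigr => x _.
  case: (Q x) => /=; last by rewrite big1.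
  rewrite big_filter_cond big_mkcond /= [RHS]big_mkcond /=; apply: eq_bigr => y _.
  by case: (Q y); case: (y < x)%N.
by rewrite pairs_gen ?filter_uniq // size_filter.
Qed.

Lemma Tpos {R : realType} (x : R) : inT x -> 0 < x.
Proof.
case=> [/andP[]//| [k [_ [k3 /andP[kx _]]]]].
have : (2 <= k.-1)%N by lia.
rewrite -(ler_nat R) => h; lra.
Qed.

Theorem theorem2 (R : realType) (A : seq nat) (w z m1 m2 : R) :
  uniq A -> all (fun a => (0 < a)%N) A ->
  w <= z -> inU m1 m2 ->
  (sift A z)%:R <=
    (sift A w)%:R
    - (m1 + m2 - 1) / (m1 * m2) * \sum_(p1 <- primes_in w z) (sift (subA A p1) w)%:R
    + 2 / (m1 * m2) * \sum_(p1 <- primes_in w z) \sum_(p2 <- primes_in w z | (p2 < p1)%N)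
         (sift (subA A (p1 * p2)) w)%:R.
Proof.
move=> uA Apos wz U.
have [t1 [t2 _]] := U.
have m1p := Tpos m1 t1; have m2p := Tpos m2 t2.
set P := primes_in w z.
have Pu : uniq P by rewrite /P /primes_in filter_uniq // iota_uniq.
have Pm : forall p, p \in P -> [/\ prime p, w <= p%:R & p%:R < z].
  by move=> p; rewrite mem_filter => /andP[/andP[/andP[? ?] ?] _].
have Pin : forall p, prime p -> w <= p%:R -> p%:R < z -> p \in P.
  move=> p pp pw pz; have z0 : 0 <= z by have := ler0n R p; lra.
  by rewrite mem_filter pp pw pz mem_iota /= add0n ltnS (truncn_ge_nat _ z0) ltW.
set n := fun a => count (fun p => p %| a)%N P.
have key1 : forall a, (0 < a)%N ->
    (~~ has (fun p => p%:R < z) (primes a)) = fw w a && (n a == 0)%N.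
  move=> a a0; rewrite /fw eqn0Ngt -has_count -negb_or; congr negb.
  apply/hasP/orP.
    case=> q; rewrite mem_primes => /and3P[qp _ qa] qz.
    case: (ltrP q%:R w) => qw.
      by left; apply/hasP; exists q; rewrite ?mem_primes ?qp ?a0 ?qa.
    by right; apply/hasP; exists q => //; exact: Pin.
  case=> /hasP[q].
    by move=> qa qw; exists q => //; lra.
  move=> qP qa; have [qp qw qz] := Pm q qP; exists q => //.
  by rewrite mem_primes qp a0 qa.
have E0 : (sift A z)%:R = \sum_(a <- A) ((fw w a)%:R * ((n a == 0)%N)%:R : R).
  rewrite /sift natr_count big_seq [RHS]big_seq; apply: eq_bigr => a aA.
  by rewrite key1 ?natr_andb //; exact: (allP Apos).
have Ew : (sift A w)%:R = \sum_(a <- A) ((fw w a)%:R : R).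
  by rewrite /sift natr_count.
have E1 : \sum_(p1 <- P) (sift (subA A p1) w)%:R
    = \sum_(a <- A) ((fw w a)%:R * (n a)%:R : R).
  transitivity (\sum_(p <- P) \sum_(a <- A) ((fw w a)%:R * ((p %| a)%N)%:R : R)).
    rewrite big_seq [RHS]big_seq; apply: eq_bigr => p pP.
    have [pp pw _] := Pm p pP.
    rewrite /sift /subA count_map count_filter natr_count big_seq [RHS]big_seq.
    apply: eq_bigr => a aA; rewrite -natr_andb; congr (_%:R).
    have a0 := allP Apos a aA; rewrite /=.
    case: (boolP (p %| a)%N) => pa; rewrite ?andbF ?andbT //.
    congr (nat_of_bool _); change (fw w (a %/ p)%N = fw w a).
    apply: (siftd w a p a0 pa) => q qp; rewrite dvdn_prime2 // => /eqP -> //.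
  rewrite exchange_big; apply: eq_bigr => a _.
  by rewrite /n natr_count mulr_sumr.
set Sa := fun a => \sum_(p1 <- P) \sum_(p2 <- P | (p2 < p1)%N)
            (((p1 %| a) && (p2 %| a))%N%:R : R).
have E2 : \sum_(p1 <- P) \sum_(p2 <- P | (p2 < p1)%N) (sift (subA A (p1 * p2)) w)%:R
    = \sum_(a <- A) ((fw w a)%:R * Sa a : R).
  transitivity (\sum_(p1 <- P) \sum_(p2 <- P | (p2 < p1)%N) \sum_(a <- A)
      ((fw w a)%:R * (((p1 %| a) && (p2 %| a))%N)%:R : R)).
    rewrite big_seq [RHS]big_seq; apply: eq_bigr => p1 P1.
    rewrite big_seq_cond [RHS]big_seq_cond; apply: eq_bigr => p2 /andP[P2 lt21].
    have [pp1 pw1 _] := Pm p1 P1; have [pp2 pw2 _] := Pm p2 P2.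
    have cop : coprime p1 p2.
      by rewrite prime_coprime // dvdn_prime2 // neq_ltn lt21 orbT.
    rewrite /sift /subA count_map count_filter natr_count big_seq [RHS]big_seq.
    apply: eq_bigr => a aA; rewrite -natr_andb; congr (_%:R).
    have a0 := allP Apos a aA; rewrite /= Gauss_dvd //.
    case: (boolP ((p1 %| a) && (p2 %| a))%N) => pa; rewrite ?andbF ?andbT //.
    have da : (p1 * p2 %| a)%N by rewrite Gauss_dvd.
    congr (nat_of_bool _); change (fw w (a %/ (p1 * p2))%N = fw w a).
    apply: (siftd w a (p1 * p2) a0 da) => q qp.
    by rewrite Euclid_dvdM // !dvdn_prime2 // => /orP[/eqP->|/eqP->].
  under eq_bigr => p1 _ do rewrite exchange_big.
  rewrite exchange_big; apply: eq_bigr => a _.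
  rewrite /Sa mulr_sumr; apply: eq_bigr => p1 _.
  by rewrite mulr_sumr.
rewrite E0 Ew E1 E2 !mulr_sumr -sumrN -!big_split /=.
apply: ler_sum => a _.
have hS : 2 * Sa a = (n a)%:R ^+ 2 - (n a)%:R by rewrite /Sa pairs.
have hU := Uprod m1 m2 (n a) U.
have m12 : m1 * m2 != 0 by apply: lt0r_neq0; apply: mulr_gt0.
have e1 : 2 / (m1 * m2) * ((fw w a)%:R * Sa a)
    = (fw w a)%:R * ((2 * Sa a) / (m1 * m2)).
  by field; rewrite !lt0r_neq0.
rewrite e1 hS.
have e2 : (fw w a)%:R - (m1 + m2 - 1) / (m1 * m2) * ((fw w a)%:R * (n a)%:R)
    + (fw w a)%:R * (((n a)%:R ^+ 2 - (n a)%:R) / (m1 * m2))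
    = (fw w a)%:R * (((n a)%:R - m1) * ((n a)%:R - m2) / (m1 * m2)).
  by field; rewrite !lt0r_neq0.
rewrite -[X in _ <= X + _]/(_ - _) e2.
have F0 : (0 : R) <= (fw w a)%:R := ler0n _ _.
apply: ler_wpM2l => //.
case: (n a =P 0)%N => [->|nz].
  have -> : ((0%N)%:R - m1) * ((0%N)%:R - m2) / (m1 * m2) = 1 :> R.
    by field; rewrite !lt0r_neq0.
  by rewrite /= mulr1n.
by rewrite mulr0n divr_ge0 // mulr_ge0 // ltW.
Qed.
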